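(* Let $(\Sigma,T)$ be a closed triangulated surface with vertex set $V$ and edge set $E$, let $\delta\in\{-1,0,1\}$ and $\Phi:E\to I_\delta$. Then $\mathcal{N}_{0,\delta}(\Phi)=\mathbb{R}^V$, and for every $r\in\mathbb{R}^V$ and every triangle with vertices $v_i,v_j,v_k$, the generalized angle at $v_k$ of the decorated ideal triangle $\Delta v_iv_jv_k$ equals $$\theta_k=\frac{2\rho_\delta(\Phi(v_iv_j)/2)}{\rho_\delta(\Phi(v_jv_k)/2)\,\rho_\delta(\Phi(v_kv_i)/2)}\,e^{-r(v_k)}.$$ Consequently there is $C:V\to\mathbb{R}_{>0}$ depending only on $\Phi$ and $\delta$ such that $\widetilde K(r)(v)=C(v)e^{-r(v)}$ for all $r\in\mathbb{R}^V$ and $v\in V$.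
   Context: Generalized hyperbolic triangles (in $\mathbb{H}^2$) are convex regions bounded by three geodesics (forming a Euclidean triangle in the Klein model) truncated by common perpendiculars at vertices outside $\overline{\mathbb{H}^2}$, with horodisks at ideal vertices; a generalized vertex has type $1$ (in $\mathbb{H}^2$), $0$ (ideal) or $-1$ (hyperideal). Generalized angle: interior angle (type 1), twice the horocyclic arc length between the sides (type 0), distance between the two sides (type $-1$). Generalized edge length between generalized vertices $u,v$: with $B_u$ the point, the horodisk, or the half-plane beyond the truncating perpendicular, it is $d(B_u,B_v)$ if these are disjoint and minus the distance between the points where $\partial B_u,\partial B_v$ meet the side otherwise. $I_\delta=\mathbb{R}_{>0}$ for $\delta\in\{0,-1\}$, $(0,\pi]$ for $\delta=1$; $\rho_1=\sin$, $\rho_0(x)=x$, $\rho_{-1}=\sinh$. Generalized circle packing of type $(0,0,\delta)$: for $r:V\to\mathbb{R}$ and an edge $v_iv_j$, $l(v_iv_j)$ is the generalized length of the side $v_iv_j$ of a generalized triangle $\Delta v_iv_jq$ of type $(0,0,\delta)$ (ideal vertices $v_i,v_j$, type-$\delta$ vertex $q$) whose sides $v_iq,v_jq$ have lengths $r(v_i),r(v_j)$ and whose generalized angle at $q$ is $\Phi(v_iv_j)$ (if $\delta=1$ and $\Phi=\pi$, $l=r(v_i)+r(v_j)$). $\mathcal{N}_{0,\delta}(\Phi)$ is the set of $r$ for which all $l$ are defined and, for each triangle $v_iv_jv_k$ of $T$, there is a decorated ideal triangle with these three edge lengths. $\widetilde K(r)(v)$ is the sum of the generalized angles at $v$ in all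 these decorated ideal triangles incident to $v$. *)

(* Defs.v *)
From mathcomp Require Import all_boot.
From Stdlib Require Import Reals ZArith.
Set Implicit Arguments. Unset Strict Implicit. Unset Printing Implicit Defensive.

Open Scope R_scope.

(* Hyperboloid (Minkowski) model of H^2 in R^{2,1}.                    *)
Record vec3 := mkv { x0 : R; x1 : R; x2 : R }.

Definition mink (a b : vec3) : R := - x0 a * x0 b + x1 a * x1 b + x2 a * x2 b.
Definition vadd (a b : vec3) : vec3 := mkv (x0 a + x0 b) (x1 a + x1 b) (x2 a + x2 b).
Definition vscal (c : R) (a : vec3) : vec3 := mkv (c * x0 a) (c * x1 a) (c * x2 a).
Definition vsub (a b : vec3) : vec3 := vadd a (vscal (-1) b).

(* generalized vertex of type 1: a point of H^2 *)
Definition H2pt (p : vec3) : Prop := mink p p = -1 /\ 0 < x0 p.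
(* generalized vertex of type 0 with a horodisk: future light-cone vector u;
   horodisk B_u = { x in H^2 | - <x,u> <= 1 }, horocycle { <x,u> = -1 } *)
Definition ideal (u : vec3) : Prop := mink u u = 0 /\ 0 < x0 u.
(* generalized vertex of type -1: unit spacelike n; truncating geodesic
   n^perp ∩ H^2, half-plane B_n = { x | <x,n> >= 0 } (the triangle lies in <x,n> <= 0) *)
Definition hyperideal (n : vec3) : Prop := mink n n = 1.

(* distinct ideal points *)
Definition not_prop (u v : vec3) : Prop := forall c : R, v <> vscal c u.

(* generalized length between two decorated ideal vertices (horodisks) *)
Definition horo_horo_len (u v : vec3) : R := ln (- mink u v / 2).
(* generalized (signed) length between a point p of H^2 and the horodisk B_u,
   measured along the geodesic from p to the ideal point of u *)
Definition pt_horo_len (p u : vec3) : R := ln (- mink p u).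

(* x is the point where the geodesic from the ideal point of w to that of u
   meets the horocycle ∂B_w *)
Definition on_horo_side (w u x : vec3) : Prop :=
  H2pt x /\ mink x w = -1 /\ exists a b : R, x = vadd (vscal a w) (vscal b u).

(* generalized angle at a type-0 vertex w between sides to u and v:
   twice the horocyclic arc length on ∂B_w between the two sides
   (horocyclic arc length between x,y on a horocycle = sqrt <x-y,x-y>) *)
Definition ideal_angle (w u v : vec3) (th : R) : Prop :=
  exists xu xv, on_horo_side w u xu /\ on_horo_side w v xv /\
    th = 2 * sqrt (mink (vsub xu xv) (vsub xu xv)).

(* unit tangent vector t at q in H^2 pointing to the ideal point of u *)
Definition tangent_to (q u t : vec3) : Prop :=
  mink t q = 0 /\ mink t t = 1 /\ exists a : R, 0 < a /\ u = vscal a (vadd q t).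

(* interior angle at a type-1 vertex q between the sides to u and v *)
Definition hyp_angle (q u v : vec3) (th : R) : Prop :=
  exists tu tv, tangent_to q u tu /\ tangent_to q v tv /\
    0 < th <= PI /\ cos th = mink tu tv.

(* foot p on the truncating geodesic n^perp of the side from the ideal point u
   (the side is the geodesic through u perpendicular to n^perp) *)
Definition foot (n u p : vec3) : Prop :=
  H2pt p /\ mink p n = 0 /\ exists a b : R, p = vadd (vscal a u) (vscal b n).

(* generalized angle at a type -1 vertex n: distance between the two sides
   (realised by the common perpendicular n^perp, i.e. between the feet) *)
Definition hyperideal_angle (n u v : vec3) (th : R) : Prop :=
  exists pu pv, foot n u pu /\ foot n v pv /\ 0 < th /\ cosh th = - mink pu pv.

Definition in_I (d : Z) (x : R) : Prop :=
  if Z.eq_dec d 1 then 0 < x <= PI else 0 < x.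
Definition rho (d : Z) (x : R) : R :=
  if Z.eq_dec d 1 then sin x else if Z.eq_dec d 0 then x else sinh x.

(* l is the generalized length of side v_i v_j of a generalized triangle
   Δ v_i v_j q of type (0,0,d), with ideal vertices v_i,v_j, sides v_i q, v_j q
   of lengths ri, rj and generalized angle phi at q.
   (d = 1, phi = PI: l = ri + rj by convention.) *)
Definition gen_len00 (d : Z) (ri rj phi l : R) : Prop :=
  if Z.eq_dec d 1 then
    (phi = PI /\ l = ri + rj) \/
    (phi < PI /\ exists ui uj q, ideal ui /\ ideal uj /\ not_prop ui uj /\ H2pt q /\
       pt_horo_len q ui = ri /\ pt_horo_len q uj = rj /\ hyp_angle q ui uj phi /\
       horo_horo_len ui uj = l)
  else if Z.eq_dec d 0 then
    exists ui uj w, ideal ui /\ ideal uj /\ ideal w /\ not_prop ui uj /\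
       not_prop w ui /\ not_prop w uj /\
       horo_horo_len w ui = ri /\ horo_horo_len w uj = rj /\ ideal_angle w ui uj phi /\
       horo_horo_len ui uj = l
  else
    exists ui uj n, ideal ui /\ ideal uj /\ hyperideal n /\ not_prop ui uj /\
       mink ui n < 0 /\ mink uj n < 0 /\
       (exists pi pj, foot n ui pi /\ foot n uj pj /\
          pt_horo_len pi ui = ri /\ pt_horo_len pj uj = rj) /\
       hyperideal_angle n ui uj phi /\ horo_horo_len ui uj = l.

(* Faces F, each with corners 'I_3; fv f k = vertex at corner k,       *)
(* fe f k = edge opposite to corner k (between corners cn1 k and cn2 k). *)
Definition cn1 (k : 'I_3) : 'I_3 := Ordinal (ltn_pmod k.+1 (ltn0Sn 2)).
Definition cn2 (k : 'I_3) : 'I_3 := cn1 (cn1 k).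

Definition closed_tri_surface (V E F : finType) (fv : F -> 'I_3 -> V)
  (fe : F -> 'I_3 -> E) : Prop :=
  (forall v : V, exists f k, fv f k = v) /\
  (forall e : E, #|[set c : (F * 'I_3)%type | fe c.1 c.2 == e]| = 2%N) /\
  (forall f g k j, fe f k = fe g j ->
     (fv f (cn1 k) = fv g (cn1 j) /\ fv f (cn2 k) = fv g (cn2 j)) \/
     (fv f (cn1 k) = fv g (cn2 j) /\ fv f (cn2 k) = fv g (cn1 j))).

Definition dec_ideal_tri (u : 'I_3 -> vec3) (len : 'I_3 -> R) : Prop :=
  (forall k, ideal (u k)) /\ (forall k, not_prop (u (cn1 k)) (u (cn2 k))) /\
  (forall k, horo_horo_len (u (cn1 k)) (u (cn2 k)) = len k).

Definition packing_lengths (V E F : finType) (fv : F -> 'I_3 -> V) (fe : F -> 'I_3 -> E)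
  (d : Z) (Phi : E -> R) (r : V -> R) (l : E -> R) : Prop :=
  forall f k, gen_len00 d (r (fv f (cn1 k))) (r (fv f (cn2 k))) (Phi (fe f k)) (l (fe f k)).

Definition in_N (V E F : finType) (fv : F -> 'I_3 -> V) (fe : F -> 'I_3 -> E)
  (d : Z) (Phi : E -> R) (r : V -> R) : Prop :=
  exists l, packing_lengths fv fe d Phi r l /\
    forall f, exists u, dec_ideal_tri u (fun k => l (fe f k)).

Definition is_Ktilde (V E F : finType) (fv : F -> 'I_3 -> V) (fe : F -> 'I_3 -> E)
  (d : Z) (Phi : E -> R) (r : V -> R) (K : V -> R) : Prop :=
  exists l, packing_lengths fv fe d Phi r l /\
  exists th : F -> 'I_3 -> R,
    (forall f, exists u, dec_ideal_tri u (fun k => l (fe f k)) /\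
        forall k, ideal_angle (u k) (u (cn1 k)) (u (cn2 k)) (th f k)) /\
    (forall v, K v = \big[Rplus/R0]_(c : (F * 'I_3)%type | fv c.1 c.2 == v) th c.1 c.2).

(* Main.v *)
Require Import Defs.
From mathcomp Require Import all_boot.
From Stdlib Require Import Reals ZArith.
Open Scope R_scope.
From HB Require Import structures.
From Stdlib Require Import Lra Psatz.
Open Scope R_scope.

Lemma mink_sym a b : mink a b = mink b a.
Proof. destruct a, b; unfold mink; simpl; ring. Qed.
Lemma mink_addl a b c : mink (vadd a b) c = mink a c + mink b c.
Proof. destruct a, b, c; unfold mink, vadd; simpl; ring. Qed.
Lemma mink_addr a b c : mink c (vadd a b) = mink c a + mink c b.
Proof. destruct a, b, c; unfold mink, vadd; simpl; ring. Qed.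
Lemma mink_scall s a c : mink (vscal s a) c = s * mink a c.
Proof. destruct a, c; unfold mink, vscal; simpl; ring. Qed.
Lemma mink_scalr s a c : mink c (vscal s a) = s * mink c a.
Proof. destruct a, c; unfold mink, vscal; simpl; ring. Qed.
Lemma mink_subl a b c : mink (vsub a b) c = mink a c - mink b c.
Proof. destruct a, b, c; unfold mink, vsub, vadd, vscal; simpl; ring. Qed.
Lemma mink_subr a b c : mink c (vsub a b) = mink c a - mink c b.
Proof. destruct a, b, c; unfold mink, vsub, vadd, vscal; simpl; ring. Qed.

Lemma cone_neg p u : 0 < x0 p -> mink p p < 0 -> 0 < x0 u -> mink u u = 0 -> mink p u < 0.
Proof.
destruct p as [p0 p1 p2], u as [u0 u1 u2]; unfold mink; simpl; intros H1 H2 H3 H4.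
assert (Hs : (p1*u1+p2*u2)^2 < (p0*u0)^2).
{ assert ((p1*u1+p2*u2)^2 + (p1*u2-p2*u1)^2 = (p1*p1+p2*p2)*(u1*u1+u2*u2)) by ring.
  assert ((p1*p1+p2*p2)*(u1*u1+u2*u2) < (p0*p0) * (u0*u0)).
  { replace (u1*u1+u2*u2) with (u0*u0) by lra. apply Rmult_lt_compat_r. nra. lra. }
  pose proof (pow2_ge_0 (p1*u2-p2*u1)). lra. }
assert (0 < p0*u0) by nra. nra.
Qed.

Lemma null_neg u v : ideal u -> ideal v -> not_prop u v -> mink u v < 0.
Proof.
intros [Hu Hu0] [Hv Hv0] Hn.
destruct u as [u0 u1 u2], v as [v0 v1 v2]; unfold mink in *; simpl in *.
assert (Hid : (u1*v1+u2*v2)^2 + (u1*v2-u2*v1)^2 = (u1*u1+u2*u2)*(v1*v1+v2*v2)) by ring.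
assert (E : (u1*u1+u2*u2)*(v1*v1+v2*v2) = (u0*v0)^2) by (replace (u1*u1+u2*u2) with (u0*u0) by lra; replace (v1*v1+v2*v2) with (v0*v0) by lra; ring).
assert (Hle : u1*v1+u2*v2 <= u0*v0).
{ assert (0 < u0*v0) by nra. pose proof (pow2_ge_0 (u1*v2-u2*v1)).
  destruct (Rle_or_lt (u1*v1+u2*v2) (u0*v0)) as [h|h]; [exact h|exfalso].
  assert ((u0*v0)^2 < (u1*v1+u2*v2)^2). { simpl. nra. } lra. }
destruct (Rle_lt_or_eq_dec _ _ Hle) as [Hlt|Heq]; [lra|].
exfalso. assert (Hc : u1*v2 = u2*v1).
{ rewrite Heq E in Hid. assert ((u1*v2-u2*v1)^2 = 0) by lra.
  apply Rminus_diag_uniq. apply Rsqr_0_uniq. unfold Rsqr. simpl in H. lra. }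
apply (Hn (v0/u0)). unfold vscal; simpl.
assert (A1 : u0*u0*v1 = u1*u0*v0).
{ replace (u0*u0) with (u1*u1+u2*u2) by lra. replace (u1*u0*v0) with (u1*(u0*v0)) by ring. rewrite <- Heq.
  replace (u1*(u1*v1+u2*v2)) with (u1*u1*v1+u2*(u1*v2)) by ring. rewrite Hc. ring. }
assert (A2 : u0*u0*v2 = u2*u0*v0).
{ replace (u0*u0) with (u1*u1+u2*u2) by lra. replace (u2*u0*v0) with (u2*(u0*v0)) by ring. rewrite <- Heq.
  replace (u2*(u1*v1+u2*v2)) with (u2*u2*v2+u1*(u2*v1)) by ring. rewrite -Hc. ring. }
f_equal; field_simplify; try lra.
- apply (Rmult_eq_reg_l (u0*u0)); [|nra]. field_simplify; [|lra]. lra.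
- apply (Rmult_eq_reg_l (u0*u0)); [|nra]. field_simplify; [|lra]. lra.
Qed.


Lemma comb_norm a b w u : mink (vadd (vscal a w) (vscal b u)) (vadd (vscal a w) (vscal b u))
  = a*a*mink w w + 2*a*b*mink w u + b*b*mink u u.
Proof. destruct w, u; unfold mink, vadd, vscal; simpl; ring. Qed.
Lemma comb_l a b w u z : mink (vadd (vscal a w) (vscal b u)) z = a * mink w z + b * mink u z.
Proof. destruct w, u, z; unfold mink, vadd, vscal; simpl; ring. Qed.

Lemma horo_side w u x : ideal w -> ideal u -> on_horo_side w u x ->
  exists b, x = vadd (vscal (1/2) w) (vscal b u) /\ b * mink u w = -1.
Proof.
intros [Hw _] [Hu _] [[Hxx _] [Hxw [a [b ->]]]].
rewrite comb_l Hw in Hxw. rewrite comb_norm Hw Hu (mink_sym w u) in Hxx.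
exists b; split; [|lra]. f_equal. f_equal. nra.
Qed.

Lemma norm_diff a b c w u v :
  mink (vsub (vadd (vscal a w) (vscal b u)) (vadd (vscal a w) (vscal c v)))
       (vsub (vadd (vscal a w) (vscal b u)) (vadd (vscal a w) (vscal c v)))
  = b*b*mink u u + c*c*mink v v - 2*b*c*mink u v.
Proof. destruct w, u, v; unfold mink, vsub, vadd, vscal; simpl; ring. Qed.

Lemma horo_angle w u v th : ideal w -> ideal u -> ideal v -> ideal_angle w u v th ->
  th = 2 * sqrt (-2 * mink u v / (mink u w * mink v w)).
Proof.
intros Hw Hu Hv [xu [xv [H1 [H2 ->]]]].
destruct (horo_side _ _ _ Hw Hu H1) as [b [-> Hb]].
destruct (horo_side _ _ _ Hw Hv H2) as [c [-> Hc]].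
rewrite norm_diff. destruct Hu as [Hu _]; destruct Hv as [Hv _]. rewrite Hu Hv.
do 2 f_equal. assert (mink u w <> 0) by (intro h; rewrite h in Hb; lra).
assert (mink v w <> 0) by (intro h; rewrite h in Hc; lra).
apply (Rmult_eq_reg_l (mink u w * mink v w)); [|apply Rmult_integral_contrapositive; auto].
field_simplify; auto.

replace (-2 * mink u w * mink v w * b * c * mink u v) with (-2 * (b*mink u w) * (c * mink v w) * mink u v) by ring.
rewrite Hb Hc. ring.
Qed.


Lemma foot_form n u p : ideal u -> hyperideal n -> mink u n < 0 -> foot n u p ->
  p = vadd (vscal (- / mink u n) u) (vscal 1 n).
Proof.
intros Hu Hn Hc Hf. pose proof Hf as [[Hpp Hp0] [Hpn [a [b Hp]]]].
assert (Hneg : mink p u < 0) by (apply cone_neg; try lra; destruct Hu; auto).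
rewrite Hp in Hpn Hpp Hneg.
destruct Hu as [Hu Hu0]. unfold hyperideal in Hn.
rewrite comb_l Hn in Hpn. rewrite comb_norm Hn Hu in Hpp. rewrite comb_l Hu (mink_sym n u) in Hneg.
remember (mink u n) as c eqn:Ec.
assert (Hb : b = - a * c) by lra.
assert (b > 0) by nra.
assert (Hb1 : b = 1).
{ rewrite Hb in Hpp. assert (a*c*(a*c) = 1) by nra. assert (b*b = 1) by (rewrite Hb; nra). nra. }
assert (a*c = -1) by lra. rewrite Hp Hb1. do 2 f_equal. apply (Rmult_eq_reg_r c); [|lra]. rewrite H0. field. lra.
Qed.

Lemma comb2 a b u v n : mink (vadd (vscal a u) (vscal 1 n)) (vadd (vscal b v) (vscal 1 n))
  = a*b*mink u v + a*mink u n + b*mink n v + mink n n.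
Proof. destruct u, v, n; unfold mink, vadd, vscal; simpl; ring. Qed.

Lemma horo_exp u v l : mink u v < 0 -> horo_horo_len u v = l -> - mink u v / 2 = exp l.
Proof. intros H <-. unfold horo_horo_len. rewrite exp_ln; lra. Qed.
Lemma pt_exp p u r : mink p u < 0 -> pt_horo_len p u = r -> - mink p u = exp r.
Proof. intros H <-. unfold pt_horo_len. rewrite exp_ln; lra. Qed.

Lemma cosh2 x : cosh (2 * x) = 1 + 2 * (sinh x * sinh x).
Proof.
unfold cosh, sinh. replace (2*x) with (x+x) by ring. replace (-(x+x)) with (-x + -x) by ring.
rewrite !exp_plus. assert (exp x * exp (-x) = 1) by (rewrite <- exp_plus; replace (x + -x) with 0 by ring; apply exp_0).
nra.
Qed.

Lemma gen_len_exp1 ri rj phi l : in_I 1 phi ->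
  gen_len00 1 ri rj phi l -> exp l = rho 1 (phi/2) * rho 1 (phi/2) * exp ri * exp rj.
Proof.
intros HI. unfold gen_len00, rho, in_I in *. simpl in *.
intros [[-> ->]|[Hlt [ui [uj [q [Hui [Huj [Hnp [Hq [Hri [Hrj [Hang Hl]]]]]]]]]]]].
  + rewrite sin_PI2 exp_plus. ring.
  + destruct Hang as [tu [tv [[Htq [Htt [a [Ha Eu]]]] [[Hvq [Hvv [b [Hb Ev]]]] [Hphi Hcos]]]]].
    pose proof (null_neg _ _ Hui Huj Hnp) as Hneg.
    pose proof (horo_exp _ _ _ Hneg Hl) as El.
    assert (Hqq : mink q q = -1) by (destruct Hq; auto).
    assert (Mi : mink q ui = - a) by (rewrite Eu mink_scalr mink_addr Hqq (mink_sym q tu) Htq; ring).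
    assert (Mj : mink q uj = - b) by (rewrite Ev mink_scalr mink_addr Hqq (mink_sym q tv) Hvq; ring).
    assert (Ea : a = exp ri) by (rewrite <- (pt_exp q ui ri); [lra|lra|auto]).
    assert (Eb : b = exp rj) by (rewrite <- (pt_exp q uj rj); [lra|lra|auto]).
    assert (Muv : mink ui uj = a * b * (-1 + cos phi)).
    { rewrite Eu Ev mink_scall mink_scalr !mink_addl !mink_addr (mink_sym q tv) Htq Hvq Hqq -Hcos. ring. }
    rewrite -El Muv -Ea -Eb.
    replace phi with (2 * (phi/2)) at 1 by field. rewrite cos_2a_sin. field.
Qed.

Lemma gen_len_exp0 ri rj phi l : in_I 0 phi ->
  gen_len00 0 ri rj phi l -> exp l = rho 0 (phi/2) * rho 0 (phi/2) * exp ri * exp rj.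
Proof.
intros HI. unfold gen_len00, rho, in_I in *. simpl in *.
intros [ui [uj [w [Hui [Huj [Hw [Hnp [Hwi [Hwj [Hri [Hrj [Hang Hl]]]]]]]]]]]].
    pose proof (null_neg _ _ Hui Huj Hnp) as N1.
    pose proof (null_neg _ _ Hw Hui Hwi) as N2.
    pose proof (null_neg _ _ Hw Huj Hwj) as N3.
    pose proof (horo_exp _ _ _ N1 Hl) as El.
    pose proof (horo_exp _ _ _ N2 Hri) as Ei.
    pose proof (horo_exp _ _ _ N3 Hrj) as Ej.
    rewrite (horo_angle _ _ _ _ Hw Hui Huj Hang).
    rewrite (mink_sym ui w) (mink_sym uj w).
    replace (2 * sqrt (-2 * mink ui uj / (mink w ui * mink w uj)) / 2) with
      (sqrt (-2 * mink ui uj / (mink w ui * mink w uj))) by field.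
    rewrite sqrt_sqrt.
    * rewrite -El -Ei -Ej. field. split; lra.
    * apply Rle_mult_inv_pos; nra.
Qed.

Lemma gen_len_expm1 ri rj phi l : in_I (-1) phi ->
  gen_len00 (-1) ri rj phi l -> exp l = rho (-1) (phi/2) * rho (-1) (phi/2) * exp ri * exp rj.
Proof.
intros HI. unfold gen_len00, rho, in_I in *. simpl in *.
intros [ui [uj [n [Hui [Huj [Hn [Hnp [Hci [Hcj [[pi [pj [Fi [Fj [Hri Hrj]]]]] [Hang Hl]]]]]]]]]]].
pose proof (horo_exp _ _ _ (null_neg _ _ Hui Huj Hnp) Hl) as El.
pose proof (foot_form _ _ _ Hui Hn Hci Fi) as Pi.
pose proof (foot_form _ _ _ Huj Hn Hcj Fj) as Pj.
assert (Hnn : mink n n = 1) by exact Hn.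
pose proof Hui as [Hii _]; pose proof Huj as [Hjj _].
assert (Ei : - mink ui n = exp ri).
{ rewrite <- (pt_exp pi ui ri); auto.
  - rewrite Pi comb_l Hii (mink_sym n ui). ring.
  - rewrite Pi comb_l Hii (mink_sym n ui). lra. }
assert (Ej : - mink uj n = exp rj).
{ rewrite <- (pt_exp pj uj rj); auto.
  - rewrite Pj comb_l Hjj (mink_sym n uj). ring.
  - rewrite Pj comb_l Hjj (mink_sym n uj). lra. }
destruct Hang as [pu [pv [Fu [Fv [Hphi Hcosh]]]]].
rewrite (foot_form _ _ _ Hui Hn Hci Fu) (foot_form _ _ _ Huj Hn Hcj Fv) comb2 Hnn (mink_sym n uj) in Hcosh.
replace phi with (2 * (phi/2)) in Hcosh by field. rewrite cosh2 in Hcosh.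
pose proof (exp_pos ri). pose proof (exp_pos rj).
assert (K: (-/mink ui n)*(-/mink uj n)*mink ui uj + (-/mink ui n)*mink ui n + (-/mink uj n)*mink uj n + 1
   = mink ui uj/(mink ui n*mink uj n) - 1) by (field; lra).
assert (Hs: sinh (phi/2) * sinh (phi/2) = - mink ui uj/(2*(mink ui n*mink uj n))).
{ assert (2 * (sinh (phi/2) * sinh (phi/2)) = - (mink ui uj/(mink ui n*mink uj n))) by lra.
  replace (- mink ui uj/(2*(mink ui n*mink uj n))) with (/2 * (- (mink ui uj/(mink ui n*mink uj n)))) by (field; lra).
  rewrite <- H1. field. }
rewrite Hs -El -Ei -Ej. field. lra.
Qed.


Lemma cn2cn1 k : cn2 (cn1 k) = k.
Proof. apply/val_inj; case: k => [[|[|[|m]]] Hm] //=. Qed.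
Lemma cn1cn2 k : cn1 (cn2 k) = k.
Proof. apply/val_inj; case: k => [[|[|[|m]]] Hm] //=. Qed.
Lemma cn2cn2 k : cn2 (cn2 k) = cn1 k.
Proof. apply/val_inj; case: k => [[|[|[|m]]] Hm] //=. Qed.

Lemma sinh_pos x : 0 < x -> 0 < sinh x.
Proof. intro H. unfold sinh. assert (exp (-x) < exp x) by (apply exp_increasing; lra). lra. Qed.

Lemma rho_pos d phi : (d = (-1)%Z \/ d = 0%Z \/ d = 1%Z) -> in_I d phi -> 0 < rho d (phi/2).
Proof.
intros [ -> | [ -> | -> ] ]; unfold rho, in_I; simpl; intro H.
- apply sinh_pos; lra.
- lra.
- apply sin_gt_0; lra.
Qed.

Lemma gen_len_exp d ri rj phi l : (d = (-1)%Z \/ d = 0%Z \/ d = 1%Z) -> in_I d phi ->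
  gen_len00 d ri rj phi l -> exp l = rho d (phi/2) * rho d (phi/2) * exp ri * exp rj.
Proof.
intros [ -> | [ -> | -> ] ].
- apply gen_len_expm1.
- apply gen_len_exp0.
- apply gen_len_exp1.
Qed.

Lemma part2 (V E F : finType) (fv : F -> 'I_3 -> V) (fe : F -> 'I_3 -> E)
  (d : Z) (Hd : d = (-1)%Z \/ d = 0%Z \/ d = 1%Z)
  (Phi : E -> R) (HPhi : forall e, in_I d (Phi e))
  (r : V -> R) (l : E -> R) (f : F) (u : 'I_3 -> vec3) (k : 'I_3) (th : R) :
     packing_lengths fv fe d Phi r l ->
     dec_ideal_tri u (fun k' => l (fe f k')) ->
     ideal_angle (u k) (u (cn1 k)) (u (cn2 k)) th ->
     th = 2 * rho d (Phi (fe f k) / 2)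
            / (rho d (Phi (fe f (cn1 k)) / 2) * rho d (Phi (fe f (cn2 k)) / 2))
            * exp (- r (fv f k)).
Proof.
intros Hp [Hid [Hnp Hlen]] Hang.
pose proof (gen_len_exp _ _ _ _ _ Hd (HPhi _) (Hp f k)) as L0.
pose proof (gen_len_exp _ _ _ _ _ Hd (HPhi _) (Hp f (cn1 k))) as L1.
pose proof (gen_len_exp _ _ _ _ _ Hd (HPhi _) (Hp f (cn2 k))) as L2.
rewrite cn2cn1 in L1. rewrite cn1cn2 cn2cn2 in L2.
pose proof (rho_pos _ _ Hd (HPhi (fe f k))) as P0.
pose proof (rho_pos _ _ Hd (HPhi (fe f (cn1 k)))) as P1.
pose proof (rho_pos _ _ Hd (HPhi (fe f (cn2 k)))) as P2.
rewrite (horo_angle _ _ _ _ (Hid k) (Hid _) (Hid _) Hang).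
pose proof (horo_exp _ _ _ (null_neg _ _ (Hid _) (Hid _) (Hnp k)) (Hlen k)) as M0.
pose proof (Hlen (cn2 k)) as H2. pose proof (Hnp (cn2 k)) as N2. simpl in H2. rewrite cn1cn2 cn2cn2 in H2 N2.
pose proof (horo_exp _ _ _ (null_neg _ _ (Hid _) (Hid _) N2) H2) as M2.
pose proof (Hlen (cn1 k)) as H1. pose proof (Hnp (cn1 k)) as N1. simpl in H1. rewrite cn2cn1 in H1 N1.
pose proof (horo_exp _ _ _ (null_neg _ _ (Hid _) (Hid _) N1) H1) as M1.
simpl in M0, M1, M2. change (cn1 (cn1 k)) with (cn2 k) in M1, L1. rewrite (mink_sym (u (cn1 k)) (u k)).
set e0 := exp (r (fv f k)). set e1 := exp (r (fv f (cn1 k))). set e2 := exp (r (fv f (cn2 k))).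
set p0 := rho d (Phi (fe f k) / 2). set p1 := rho d (Phi (fe f (cn1 k)) / 2). set p2 := rho d (Phi (fe f (cn2 k)) / 2).
assert (0 < p0) by exact P0. assert (0 < p1) by exact P1. assert (0 < p2) by exact P2.
assert (0 < e0) by apply exp_pos. assert (0 < e1) by apply exp_pos. assert (0 < e2) by apply exp_pos.
assert (X : -2 * mink (u (cn1 k)) (u (cn2 k)) / (mink (u k) (u (cn1 k)) * mink (u (cn2 k)) (u k))
  = (p0 / (p1 * p2 * e0)) * (p0 / (p1 * p2 * e0))).
{ replace (mink (u (cn1 k)) (u (cn2 k))) with (-2 * exp (l (fe f k))) by lra.
  replace (mink (u k) (u (cn1 k))) with (-2 * exp (l (fe f (cn2 k)))) by lra.
  replace (mink (u (cn2 k)) (u k)) with (-2 * exp (l (fe f (cn1 k)))) by lra.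
  rewrite L0 L1 L2. fold e0 e1 e2 p0 p1 p2. field. repeat split; lra. }
rewrite X sqrt_square.
- rewrite exp_Ropp. fold e0. field. repeat split; lra.
- apply Rlt_le. apply Rdiv_lt_0_compat; [lra|]. apply Rmult_lt_0_compat; [nra|lra].
Qed.


Definition Lfun d ri rj phi := ln (rho d (phi/2) * rho d (phi/2) * exp ri * exp rj).

Ltac lnfix E := match goal with |- ln ?x = _ => replace x with E by (field; lra); apply ln_exp end.

Ltac lnfix2 E := match goal with |- ln ?x = _ => replace x with E by nra; apply ln_exp end.

Lemma constr0 ri rj phi : in_I 0 phi -> gen_len00 0 ri rj phi (Lfun 0 ri rj phi).
Proof.
unfold gen_len00, Lfun, rho, in_I; simpl; intro Hphi.
set P := phi/2. assert (HP : 0 < P) by (unfold P; lra).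
set Ei := exp ri. set Ej := exp rj.
assert (0 < Ei) by apply exp_pos. assert (0 < Ej) by apply exp_pos.
exists (mkv (Ei*P) (Ei*P) 0), (mkv (Ej*P) (-(Ej*P)) 0), (mkv (2/P) 0 (2/P)).
unfold ideal, not_prop, horo_horo_len, mink, vscal; simpl.
split; [split; [ring|nra]|].
split; [split; [ring|nra]|].
split; [split; [field; lra|apply Rdiv_lt_0_compat; lra]|].
split; [intros c Hc; injection Hc; intros; nra|].
split; [intros c Hc; injection Hc; intros; nra|].
split; [intros c Hc; injection Hc; intros; nra|].
split; [lnfix Ei|]. split; [lnfix Ej|].
split.
- exists (mkv (1/P + P/2) (P/2) (1/P)), (mkv (1/P + P/2) (-(P/2)) (1/P)).
  unfold on_horo_side, H2pt, mink, vsub, vadd, vscal; simpl.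
  split; [split; [split; [field; lra|]|split; [field; lra|]]|].
  + assert (0 < 1/P) by (apply Rdiv_lt_0_compat; lra). lra.
  + exists (1/2), (1/(2*Ei)). f_equal; field; lra.
  + split; [split; [split; [field; lra|]|split; [field; lra|]]|].
    * assert (0 < 1/P) by (apply Rdiv_lt_0_compat; lra). lra.
    * exists (1/2), (1/(2*Ej)). f_equal; field; lra.
    * match goal with |- _ = 2 * sqrt ?x => replace x with (P * P) by (field; lra) end.
      rewrite sqrt_square; [unfold P; field|lra].
- f_equal. field.
Qed.

Lemma constr1 ri rj phi : in_I 1 phi -> gen_len00 1 ri rj phi (Lfun 1 ri rj phi).
Proof.
unfold gen_len00, Lfun, rho, in_I; simpl; intros [Hphi HPI].
set Ei := exp ri. set Ej := exp rj.
assert (0 < Ei) by apply exp_pos. assert (0 < Ej) by apply exp_pos.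
destruct (Req_dec phi PI) as [Heq|Hne].
{ left. split; [exact Heq|]. rewrite Heq sin_PI2. replace (1*1*Ei*Ej) with (exp (ri+rj)) by (unfold Ei, Ej; rewrite exp_plus; ring). apply ln_exp. }
right. split; [lra|].
assert (Hs : 0 < sin phi) by (apply sin_gt_0; lra).
assert (Hsc : sin phi * sin phi + cos phi * cos phi = 1) by (pose proof (sin2_cos2 phi); unfold Rsqr in *; lra).
exists (mkv Ei Ei 0), (mkv Ej (Ej * cos phi) (Ej * sin phi)), (mkv 1 0 0).
unfold ideal, not_prop, H2pt, pt_horo_len, horo_horo_len, hyp_angle, tangent_to, mink, vscal, vadd; simpl.
split; [split; [ring|lra]|].
split; [split; [|lra]|].
{ replace (- Ej * Ej + Ej * cos phi * (Ej * cos phi) + Ej * sin phi * (Ej * sin phi)) with (Ej*Ej*(sin phi * sin phi + cos phi * cos phi - 1)) by ring. rewrite Hsc. ring. }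
split; [intros c Hc; injection Hc; intros; nra|].
split; [split; [ring|lra]|].
split; [lnfix Ei|]. split; [lnfix Ej|].
split.
- exists (mkv 0 1 0), (mkv 0 (cos phi) (sin phi)).
  simpl. split; [split; [ring|split; [ring|exists Ei; split; [lra|f_equal; ring]]]|].
  simpl; split; [split; [ring|split; [lra|exists Ej; split; [lra|f_equal; ring]]]|].
  split; [lra|ring].
- f_equal.
  replace phi with (2 * (phi/2)) at 1 2 by field. rewrite cos_2a_sin. field.
Qed.

Lemma cosh_sinh x : cosh x * cosh x - sinh x * sinh x = 1.
Proof.
unfold cosh, sinh. assert (exp x * exp (-x) = 1) by (rewrite <- exp_plus; replace (x + -x) with 0 by ring; apply exp_0).
nra.
Qed.
Lemma cosh_pos x : 0 < cosh x.
Proof. unfold cosh. pose proof (exp_pos x). pose proof (exp_pos (-x)). lra. Qed.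

Lemma constrm1 ri rj phi : in_I (-1) phi -> gen_len00 (-1) ri rj phi (Lfun (-1) ri rj phi).
Proof.
unfold gen_len00, Lfun, rho, in_I; simpl; intros Hphi.
set Ei := exp ri. set Ej := exp rj.
assert (0 < Ei) by apply exp_pos. assert (0 < Ej) by apply exp_pos.
set ch := cosh (phi/2). set sh := sinh (phi/2).
assert (Hcs : ch * ch - sh * sh = 1) by apply cosh_sinh.
assert (Hch : 0 < ch) by apply cosh_pos.
assert (Hsh : 0 < sh) by (apply sinh_pos; lra).
exists (mkv (Ei*ch) (Ei*sh) (-Ei)), (mkv (Ej*ch) (-(Ej*sh)) (-Ej)), (mkv 0 0 1).
unfold ideal, hyperideal, not_prop, hyperideal_angle, foot, H2pt, pt_horo_len, horo_horo_len, mink, vscal, vadd; simpl.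
split; [split; [nra|nra]|].
split; [split; [nra|nra]|].
split; [ring|].
split; [intros c Hc; injection Hc; intros; nra|].
split; [lra|]. split; [lra|].
split.
{ exists (mkv ch sh 0), (mkv ch (-sh) 0). simpl.
  split; [split; [split; [nra|lra]|split; [ring|exists (1/Ei), 1; f_equal; field; lra]]|].
  split; [split; [split; [nra|lra]|split; [ring|exists (1/Ej), 1; f_equal; field; lra]]|].
  split; [lnfix2 Ei|lnfix2 Ej]. }
split.
- exists (mkv ch sh 0), (mkv ch (-sh) 0). simpl.
  split; [split; [split; [nra|lra]|split; [ring|exists (1/Ei), 1; f_equal; field; lra]]|].
  split; [split; [split; [nra|lra]|split; [ring|exists (1/Ej), 1; f_equal; field; lra]]|].
  split; [lra|]. replace phi with (2 * (phi/2)) at 1 by field. rewrite cosh2. fold sh. nra.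
- f_equal. assert (Ec : ch*ch = 1 + sh*sh) by lra. match goal with |- ?a = _ => replace a with (Ei*Ej*((ch*ch + sh*sh) - 1)/2) by field end. rewrite Ec. field.
Qed.


Definition o0 : 'I_3 := @Ordinal 3 0 isT.
Definition o1 : 'I_3 := @Ordinal 3 1 isT.
Definition o2 : 'I_3 := @Ordinal 3 2 isT.

Definition tri_u (L : 'I_3 -> R) (k : 'I_3) : vec3 :=
  let A := exp (L o0 / 2) in let B := exp (L o1 / 2) in let C := exp (L o2 / 2) in
  match nat_of_ord k with
  | O => mkv (2*B*C/A) 0 (2*B*C/A)
  | S O => mkv (A*C/B) (A*C/B) 0
  | _ => mkv (A*B/C) (-(A*B/C)) 0 end.

Lemma ord_cases (P : 'I_3 -> Prop) : P o0 -> P o1 -> P o2 -> forall k, P k.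
Proof.
intros H0 H1 H2 [[|[|[|m]]] Hm].
- by rewrite (_ : Ordinal Hm = o0); [|apply/val_inj].
- by rewrite (_ : Ordinal Hm = o1); [|apply/val_inj].
- by rewrite (_ : Ordinal Hm = o2); [|apply/val_inj].
- by [].
Qed.

Lemma expsq x : exp (x/2) * exp (x/2) = exp x.
Proof. rewrite <- exp_plus. f_equal. field. Qed.

Lemma tri_exists (L : 'I_3 -> R) : exists u, dec_ideal_tri u L.
Proof.
exists (tri_u L).
pose proof (expsq (L o0)) as EA. pose proof (expsq (L o1)) as EB. pose proof (expsq (L o2)) as EC.
set A := exp (L o0 / 2) in EA *. set B := exp (L o1 / 2) in EB *. set C := exp (L o2 / 2) in EC *.
assert (0 < A) by apply exp_pos. assert (0 < B) by apply exp_pos. assert (0 < C) by apply exp_pos.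
assert (0 < A*B/C) by (apply Rdiv_lt_0_compat; nra).
assert (0 < A*C/B) by (apply Rdiv_lt_0_compat; nra).
assert (0 < 2*B*C/A) by (apply Rdiv_lt_0_compat; nra).
split; [|split]; apply ord_cases; unfold tri_u, ideal, not_prop, horo_horo_len, mink, vscal; simpl; fold A B C.
1-3: split; [ring|lra].
1-3: intros c Hc; injection Hc; intros; nra.
- match goal with |- ln ?x = _ => replace x with (A*A) by (field; lra) end. rewrite EA. apply ln_exp.
- match goal with |- ln ?x = _ => replace x with (B*B) by (field; lra) end. rewrite EB. apply ln_exp.
- match goal with |- ln ?x = _ => replace x with (C*C) by (field; lra) end. rewrite EC. apply ln_exp.
Qed.


Lemma Rplus_assoc' : associative Rplus. Proof. intros a b c; ring. Qed.
Lemma Rplus_comm' : commutative Rplus. Proof. intros a b; ring. Qed.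
Lemma Rplus_0_l' : left_id 0 Rplus. Proof. intros a; ring. Qed.
HB.instance Definition _ := Monoid.isComLaw.Build R 0 Rplus Rplus_assoc' Rplus_comm' Rplus_0_l'.

Lemma big_pos (I : finType) (P : pred I) (G : I -> R) :
  (forall i, P i -> 0 < G i) -> (exists i, P i) -> 0 < \big[Rplus/0]_(i | P i) G i.
Proof.
intros HG [j Hj]. rewrite (bigD1 j Hj) /=.
have : 0 <= \big[Rplus/0]_(i | P i && (i != j)) G i.
{ apply: (big_ind (fun x => 0 <= x)); [lra| intros; lra |]. intros i Hi. move/andP: Hi => [Hi _]. apply Rlt_le. auto. }
pose proof (HG j Hj). lra.
Qed.

Lemma big_mulr (I : finType) (P : pred I) (G H : I -> R) (c : R) :
  (forall i, P i -> G i = H i * c) -> \big[Rplus/0]_(i | P i) G i = (\big[Rplus/0]_(i | P i) H i) * c.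
Proof.
intro HGH. apply: (big_ind2 (fun x y => x = y * c)); [ring| intros; subst; ring | exact HGH].
Qed.


Lemma constr d ri rj phi : (d = (-1)%Z \/ d = 0%Z \/ d = 1%Z) -> in_I d phi ->
  gen_len00 d ri rj phi (Lfun d ri rj phi).
Proof. intros [ -> | [ -> | -> ] ]; [apply constrm1|apply constr0|apply constr1]. Qed.

Lemma Lfun_sym d a b phi : Lfun d a b phi = Lfun d b a phi.
Proof. unfold Lfun. f_equal. ring. Qed.

Theorem mainTheorem15 (V E F : finType) (fv : F -> 'I_3 -> V) (fe : F -> 'I_3 -> E)
  (Hsurf : closed_tri_surface fv fe)
  (d : Z) (Hd : d = (-1)%Z \/ d = 0%Z \/ d = 1%Z)
  (Phi : E -> R) (HPhi : forall e, in_I d (Phi e)) :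
  (forall r : V -> R, in_N fv fe d Phi r) /\
  (forall (r : V -> R) (l : E -> R) (f : F) (u : 'I_3 -> vec3) (k : 'I_3) (th : R),
     packing_lengths fv fe d Phi r l ->
     dec_ideal_tri u (fun k' => l (fe f k')) ->
     ideal_angle (u k) (u (cn1 k)) (u (cn2 k)) th ->
     th = 2 * rho d (Phi (fe f k) / 2)
            / (rho d (Phi (fe f (cn1 k)) / 2) * rho d (Phi (fe f (cn2 k)) / 2))
            * exp (- r (fv f k))) /\
  (exists C : V -> R, (forall v, 0 < C v) /\
     forall (r : V -> R) (K : V -> R), is_Ktilde fv fe d Phi r K ->
       forall v, K v = C v * exp (- r v)).
Proof.
destruct Hsurf as [Hcov [_ Hends]].
split; [|split].
- intro r.
  exists (fun e => match [pick c : (F * 'I_3)%type | fe c.1 c.2 == e] with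
           | Some c => Lfun d (r (fv c.1 (cn1 c.2))) (r (fv c.1 (cn2 c.2))) (Phi e)
           | None => 0 end).
  split.
  + intros f k. case: pickP.
    * move=> c /eqP Hc. destruct (Hends _ _ _ _ Hc) as [[E1 E2]|[E1 E2]].
      -- rewrite E1 E2. apply constr; auto.
      -- rewrite E1 E2 Lfun_sym. apply constr; auto.
    * move=> Hn. exfalso. pose proof (Hn (f, k)) as H. simpl in H. by rewrite eqxx in H.
  + intro f. apply tri_exists.
- intros r l f u k th Hp Ht Ha. exact (part2 _ _ _ fv fe d Hd Phi HPhi r l f u k th Hp Ht Ha).
- set cc := fun c : (F * 'I_3)%type => 2 * rho d (Phi (fe c.1 c.2) / 2)
            / (rho d (Phi (fe c.1 (cn1 c.2)) / 2) * rho d (Phi (fe c.1 (cn2 c.2)) / 2)).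
  exists (fun v => \big[Rplus/0]_(c : (F * 'I_3)%type | fv c.1 c.2 == v) cc c).
  split.
  + intro v. apply big_pos.
    * intros [f k] _. unfold cc; simpl.
      pose proof (rho_pos _ _ Hd (HPhi (fe f k))).
      pose proof (rho_pos _ _ Hd (HPhi (fe f (cn1 k)))).
      pose proof (rho_pos _ _ Hd (HPhi (fe f (cn2 k)))).
      apply Rdiv_lt_0_compat; [lra|]. apply Rmult_lt_0_compat; lra.
    * destruct (Hcov v) as [f [k Hfk]]. exists (f, k). simpl. by apply/eqP.
  + intros r K [l [Hp [th [Hth HK]]]] v.
    rewrite HK. apply big_mulr. intros [f k] Hfk. simpl in Hfk. move/eqP: Hfk => Hfk.
    destruct (Hth f) as [u [Hu Hang]].
    unfold cc; simpl. rewrite <- Hfk.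
    exact (part2 _ _ _ fv fe d Hd Phi HPhi r l f u k _ Hp Hu (Hang k)).
Qed.
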